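(* Let $\alpha<1$ be a real number. Let $P_1$ be a set of primes with $P_1(X)\ge c\frac{\sqrt{X}}{(\log X)^{\alpha}}$ for all sufficiently large real $X$, where $c>0$ is a constant. Then for any integer $k\ge 2$, $$P_1^k(X)\ge c_1\sqrt{X}(\log X)^{k-1-k\alpha}$$ for all sufficiently large $X$, where $c_1>0$ is a constant depending only on $c$ and $k$.
   Context: $P_1^1=P_1$, $P_1^k=P_1P_1^{k-1}$ where $AB=\{ab:a\in A,b\in B\}$; for $S\subset\mathbb{N}_0$, $S(X)=|S\cap[1,X]|$. *)

(* Defs.v *)
From Stdlib Require Import Reals ZArith Znumtheory ClassicalDescription.
Open Scope R_scope.

Fixpoint count_upto (P : nat -> Prop) (N : nat) : nat :=
  match N with
  | O => O
  | S m => (count_upto P m +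
            (if excluded_middle_informative (P (S m)) then 1 else 0))%nat
  end.

(* S(X) = |S ∩ [1, X]| for real X (for X < 1 this is 0). *)
Definition counting (P : nat -> Prop) (X : R) : nat :=
  count_upto P (Z.to_nat (Int_part X)).

Definition setmul (A B : nat -> Prop) : nat -> Prop :=
  fun n => exists a b, A a /\ B b /\ n = (a * b)%nat.

(* P^1 = P, P^k = P P^{k-1}; P^0 := {1} (unused). *)
Fixpoint setpow (P : nat -> Prop) (k : nat) : nat -> Prop :=
  match k with
  | O => fun n => n = 1%nat
  | S O => P
  | S k' => setmul P (setpow P k')
  end.

Definition is_prime_nat (p : nat) : Prop := prime (Z.of_nat p).

(* Main.v *)
Require Import Defs.
From Stdlib Require Import Reals Lra Lia Psatz ZArith Znumtheory ClassicalDescription List.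
Open Scope R_scope.

Fixpoint sumR (f : nat -> R) (n : nat) : R :=
  match n with O => 0 | S m => sumR f m + f m end.

Definition indi (A : Prop) : R := if excluded_middle_informative A then 1 else 0.

Lemma indi_nonneg A : 0 <= indi A.
Proof. unfold indi; destruct excluded_middle_informative; lra. Qed.
Lemma indi_le1 A : indi A <= 1.
Proof. unfold indi; destruct excluded_middle_informative; lra. Qed.
Lemma indi_T (A : Prop) : A -> indi A = 1.
Proof. unfold indi; destruct excluded_middle_informative; tauto. Qed.
Lemma indi_F (A : Prop) : ~ A -> indi A = 0.
Proof. unfold indi; destruct excluded_middle_informative; tauto. Qed.

Lemma sumR_ext f g n : (forall i, (i < n)%nat -> f i = g i) -> sumR f n = sumR g n.
Proof. induction n; simpl; intros H; auto. rewrite IHn by (intros; apply H; lia). rewrite H by lia; auto. Qed.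

Lemma sumR_le f g n : (forall i, (i < n)%nat -> f i <= g i) -> sumR f n <= sumR g n.
Proof. induction n; simpl; intros H. lra. assert (H1 := H n (Nat.lt_succ_diag_r n)).
  assert (sumR f n <= sumR g n) by (apply IHn; intros; apply H; lia). lra. Qed.

Lemma sumR_nonneg f n : (forall i, (i < n)%nat -> 0 <= f i) -> 0 <= sumR f n.
Proof. intros H. replace 0 with (sumR (fun _ => 0) n). apply sumR_le; auto.
  induction n; simpl; auto. rewrite IHn; try lra. intros; apply H; lia. Qed.

Lemma sumR_zero f n : (forall i, (i < n)%nat -> f i = 0) -> sumR f n = 0.
Proof. induction n; simpl; intros H; auto. rewrite IHn by (intros; apply H; lia). rewrite H by lia; lra. Qed.

Lemma sumR_plus f g n : sumR (fun i => f i + g i) n = sumR f n + sumR g n.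
Proof. induction n; simpl; lra. Qed.

Lemma sumR_scal c f n : sumR (fun i => c * f i) n = c * sumR f n.
Proof. induction n; simpl; [lra|]. rewrite IHn; lra. Qed.

Lemma sumR_swap (F : nat -> nat -> R) n m :
  sumR (fun i => sumR (fun j => F i j) m) n = sumR (fun j => sumR (fun i => F i j) n) m.
Proof. induction n; simpl. symmetry; apply sumR_zero; auto.
  rewrite IHn. rewrite <- sumR_plus. reflexivity. Qed.

Lemma sumR_split f a b : sumR f (a + b) = sumR f a + sumR (fun j => f (a + j)%nat) b.
Proof. induction b; simpl. rewrite Nat.add_0_r; lra. rewrite Nat.add_succ_r; simpl. rewrite IHb; lra. Qed.

Lemma sumR_mono_range f a b : (forall i, (i < b)%nat -> 0 <= f i) -> (a <= b)%nat -> sumR f a <= sumR f b.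
Proof. intros H Hab. replace b with (a + (b - a))%nat by lia. rewrite sumR_split.
  assert (0 <= sumR (fun j => f (a + j)%nat) (b - a)) by (apply sumR_nonneg; intros; apply H; lia). lra. Qed.

Lemma sumR_ge_term f n i : (forall j, (j < n)%nat -> 0 <= f j) -> (i < n)%nat -> f i <= sumR f n.
Proof. intros H Hi. replace n with (S i + (n - S i))%nat by lia. rewrite sumR_split. simpl.
  assert (0 <= sumR f i) by (apply sumR_nonneg; intros; apply H; lia).
  assert (0 <= sumR (fun j => f (S (i + j))) (n - S i)) by (apply sumR_nonneg; intros; apply H; lia). lra. Qed.

Lemma sumR_shift f n : sumR f (S n) = f 0%nat + sumR (fun i => f (S i)) n.
Proof. induction n. simpl; lra. change (sumR f (S (S n))) with (sumR f (S n) + f (S n)). rewrite IHn. simpl. lra. Qed.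

Lemma sumR_ind_unique (A : nat -> Prop) n :
  (forall i j, (i < n)%nat -> (j < n)%nat -> A i -> A j -> i = j) -> sumR (fun i => indi (A i)) n <= 1.
Proof. induction n; simpl; intros H. lra.
  destruct (excluded_middle_informative (A n)) as [Hn|Hn].
  - rewrite sumR_zero. rewrite indi_T; auto; lra. intros i Hi. apply indi_F. intros Ai.
    assert (i = n) by (apply H; auto; lia). lia.
  - rewrite indi_F; auto. assert (sumR (fun i => indi (A i)) n <= 1) by (apply IHn; intros; apply H; auto; lia). lra. Qed.

Lemma sumR_ind_list (l : list nat) n : sumR (fun p => indi (In p l)) n <= INR (length l).
Proof. induction l; cbn [In length sumR].
  - rewrite sumR_zero. simpl; lra. intros; apply indi_F; auto.
  - rewrite S_INR. apply Rle_trans with (sumR (fun p => indi (p = a) + indi (In p l)) n).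
    + apply sumR_le; intros i _. unfold indi. repeat destruct excluded_middle_informative; try lra; exfalso; intuition congruence.
    + rewrite sumR_plus. assert (sumR (fun p => indi (p = a)) n <= 1) by (apply sumR_ind_unique; intros; lia). lra. Qed.

Lemma count_sum P N : INR (count_upto P N) = sumR (fun i => indi (P (S i))) N.
Proof. induction N; simpl; auto. rewrite plus_INR, IHN. unfold indi. destruct excluded_middle_informative; simpl; lra. Qed.

Lemma count_S P N : INR (count_upto P (S N)) = INR (count_upto P N) + indi (P (S N)).
Proof. rewrite !count_sum. reflexivity. Qed.

Lemma abel P (f : nat -> R) M :
  sumR (fun i => indi (P (S i)) * f (S i)) M =
  INR (count_upto P M) * f (S M) + sumR (fun i => INR (count_upto P (S i)) * (f (S i) - f (S (S i)))) M.
Proof. induction M. simpl; lra. cbn [sumR]. rewrite IHM, count_S. ring. Qed.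

Lemma ln_le x y : 0 < x -> x <= y -> ln x <= ln y.
Proof. intros Hx [H|H]. left; apply ln_increasing; auto. subst; lra. Qed.

Lemma exp_le x y : x <= y -> exp x <= exp y.
Proof. intros [H|H]. left; apply exp_increasing; auto. subst; lra. Qed.

Definition Kc (g : R) := exp (Rabs g * ln 4).

Lemma Kc_pos g : 0 < Kc g.
Proof. apply exp_pos. Qed.

Lemma ln4_pos : 0 < ln 4.
Proof. rewrite <- ln_1. apply ln_increasing; lra. Qed.

Lemma Rpower_near g L t : 0 < t -> L <= 4 * t -> t <= L ->
  Rpower L g <= Kc g * Rpower t g /\ Rpower t g <= Kc g * Rpower L g.
Proof. intros Ht H1 H2. unfold Kc, Rpower. rewrite <- !exp_plus.
  assert (ln L <= ln 4 + ln t). { rewrite <- ln_mult by lra. apply ln_le; lra. }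
  assert (ln t <= ln L) by (apply ln_le; lra).
  assert (0 < ln 4) by apply ln4_pos.
  split; apply exp_le; destruct (Rle_dec 0 g).
  - rewrite Rabs_right by lra. nra.
  - rewrite Rabs_left by lra. nra.
  - rewrite Rabs_right by lra. nra.
  - rewrite Rabs_left by lra. nra.
Qed.

Lemma ln_step y : 0 < y -> ln (y + 1) - ln y <= / y.
Proof. intros Hy. replace (y + 1) with (y * (1 + / y)) by (field; lra).
  rewrite ln_mult by (try apply Rplus_lt_0_compat; try apply Rinv_0_lt_compat; lra).
  assert (ln (1 + / y) <= / y).
  { rewrite <- (ln_exp (/ y)) at 2. apply ln_le. assert (0 < / y) by (apply Rinv_0_lt_compat; lra). lra.
    apply exp_ineq1_le. }
  lra. Qed.

Lemma harmonic x0 b : 0 < x0 -> ln (x0 + INR b) - ln x0 <= sumR (fun j => / (x0 + INR j)) b.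
Proof. intros H. induction b. simpl. rewrite Rplus_0_r; lra.
  simpl sumR. rewrite S_INR. assert (0 <= INR b) by apply pos_INR.
  assert (ln (x0 + INR b + 1) - ln (x0 + INR b) <= / (x0 + INR b)) by (apply ln_step; lra).
  replace (x0 + (INR b + 1)) with (x0 + INR b + 1) by ring. lra. Qed.

Lemma sqrt_diff n : 0 < n -> / (2 * sqrt n * (n + 1)) <= / sqrt n - / sqrt (n + 1).
Proof. intros Hn. set (s := sqrt n). set (t := sqrt (n + 1)).
  assert (Hs : 0 < s) by (apply sqrt_lt_R0; lra).
  assert (Ht : 0 < t) by (apply sqrt_lt_R0; lra).
  assert (Hss : s * s = n) by (apply sqrt_sqrt; lra).
  assert (Htt : t * t = n + 1) by (apply sqrt_sqrt; lra).
  assert (s < t). { destruct (Rlt_le_dec s t); auto. nra. }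
  rewrite <- Htt. replace (/ (2 * s * (t * t))) with ((t * t - s * s) / (2 * s * (t * t)))
    by (rewrite Htt, Hss; field; lra).
  assert (E : / s - / t - (t * t - s * s) / (2 * s * (t * t)) = (t - s) * (t - s) / (2 * s * (t * t))) by (field; lra).
  assert (0 <= (t - s) * (t - s) / (2 * s * (t * t))).
  { apply Rmult_le_pos. nra. left; apply Rinv_0_lt_compat. nra. }
  lra. Qed.

Lemma floor_bounds X : 0 <= X -> INR (Z.to_nat (Int_part X)) <= X < INR (Z.to_nat (Int_part X)) + 1.
Proof. intros HX. destruct (base_Int_part X) as [H1 H2].
  assert (Hz : (0 <= Int_part X)%Z). { apply le_IZR. apply Rnot_lt_le; intro Hc. apply lt_IZR in Hc.
    assert (Int_part X <= -1)%Z by lia. apply IZR_le in H. simpl in H. lra. }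
  rewrite INR_IZR_INZ, Z2Nat.id by auto. lra. Qed.

Lemma counting_INR P m : counting P (INR m) = count_upto P m.
Proof. unfold counting. rewrite Int_part_INR, Nat2Z.id. reflexivity. Qed.

Lemma nat_above r : exists n : nat, r <= INR n.
Proof. destruct (archimed (Rabs r)) as [H1 _]. exists (Z.to_nat (up (Rabs r))).
  assert (0 <= Rabs r) by apply Rabs_pos.
  assert (0 <= up (Rabs r))%Z by (apply le_IZR; lra).
  rewrite INR_IZR_INZ, Z2Nat.id by auto. pose proof (Rle_abs r). lra. Qed.

Lemma ln_pos x : 1 < x -> 0 < ln x.
Proof. intros H. rewrite <- ln_1. apply ln_increasing; lra. Qed.

Lemma Rpower_1ma L a : 0 < L -> Rpower L (1 - a) = L * / Rpower L a.
Proof. intros H. unfold Rminus. rewrite Rpower_plus, Rpower_1, Rpower_Ropp; auto. Qed.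

Lemma Rpower_pos x y : 0 < Rpower x y.
Proof. apply exp_pos. Qed.

Lemma keyL alpha c : 0 < c -> exists d, 0 < d /\ forall P : nat -> Prop,
  (exists X0, forall X, X0 <= X -> INR (counting P X) >= c * sqrt X / Rpower (ln X) alpha) ->
  exists M0 : nat, forall M : nat, (M0 <= M)%nat ->
    sumR (fun i => indi (P (S i)) * / sqrt (INR (S i))) M >= d * Rpower (ln (INR M)) (1 - alpha).
Proof.
  intros Hc. exists (c / (8 * Kc alpha)). split.
  { pose proof (Kc_pos alpha). apply Rdiv_lt_0_compat; lra. }
  intros P [X0 HX0]. destruct (nat_above X0) as [n0 Hn0].
  exists (Nat.max 16 (n0 * n0)). intros M HM.
  set (s := Nat.sqrt M).
  assert (Hs1 : (s * s <= M)%nat) by (apply Nat.sqrt_le_square; lia).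
  assert (Hs2 : (M < S s * S s)%nat) by (apply Nat.sqrt_lt_square; lia).
  assert (Hs0 : (n0 <= s)%nat) by (apply Nat.sqrt_le_square; lia).
  assert (Hs4 : (4 <= s)%nat) by (apply Nat.sqrt_le_square; lia).
  assert (HsM : (s <= M)%nat) by nia.
  assert (HM16 : 16 <= INR M) by (replace 16 with (INR 16) by (simpl; lra); apply le_INR; lia).
  set (LM := ln (INR M)).
  assert (HLM : 0 < LM) by (apply ln_pos; lra).
  set (K := Kc alpha). assert (HK : 0 < K) by apply Kc_pos.
  set (RR := Rpower LM alpha). assert (HRR : 0 < RR) by apply Rpower_pos.
  set (f := fun n : nat => / sqrt (INR n)).
  change (sumR (fun i => indi (P (S i)) * f (S i)) M >= c / (8 * K) * Rpower LM (1 - alpha)).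
  rewrite abel.
  set (g := fun i : nat => INR (count_upto P (S i)) * (f (S i) - f (S (S i)))).
  assert (Hfd : forall i : nat, / (2 * sqrt (INR (S i)) * (INR (S i) + 1)) <= f (S i) - f (S (S i))).
  { intros i. unfold f. rewrite (S_INR (S i)). apply sqrt_diff. apply lt_0_INR; lia. }
  assert (Hfd0 : forall i : nat, 0 <= f (S i) - f (S (S i))).
  { intros i. eapply Rle_trans; [|apply Hfd]. left; apply Rinv_0_lt_compat.
    assert (0 < sqrt (INR (S i))) by (apply sqrt_lt_R0, lt_0_INR; lia).
    assert (0 < INR (S i)) by (apply lt_0_INR; lia). nra. }
  assert (Hg0 : forall i, 0 <= g i).
  { intros i. unfold g. apply Rmult_le_pos; auto. apply pos_INR. }
  assert (H1 : 0 <= INR (count_upto P M) * f (S M)).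
  { apply Rmult_le_pos. apply pos_INR. unfold f. left; apply Rinv_0_lt_compat, sqrt_lt_R0, lt_0_INR; lia. }
  assert (Hsplit : sumR (fun j => g (s + j)%nat) (M - s) <= sumR g M).
  { replace M with (s + (M - s))%nat at 2 by lia. rewrite sumR_split.
    assert (0 <= sumR g s) by (apply sumR_nonneg; auto). lra. }
  assert (Hterm : forall j, (j < M - s)%nat ->
     (c / (2 * K * RR)) * / (INR s + 2 + INR j) <= g (s + j)%nat).
  { intros j Hj. unfold g.
    set (n := S (s + j)).
    assert (Hn : INR n = INR s + INR j + 1) by (unfold n; rewrite S_INR, plus_INR; ring).
    assert (HnM : INR n <= INR M) by (apply le_INR; unfold n; lia).
    assert (Hn1 : 1 < INR n). { replace 1 with (INR 1) by reflexivity. apply lt_INR. unfold n; lia. }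
    assert (Hnn : INR M <= INR n * INR n).
    { rewrite <- mult_INR. apply le_INR. assert (S s * S s <= n * n)%nat by (apply Nat.mul_le_mono; unfold n; lia). lia. }
    assert (Hlnn : 0 < ln (INR n)) by (apply ln_pos; lra).
    assert (HLn : LM <= 4 * ln (INR n)).
    { unfold LM. assert (ln (INR M) <= ln (INR n * INR n)) by (apply ln_le; lra).
      rewrite ln_mult in H by lra. lra. }
    assert (HnLM : ln (INR n) <= LM) by (apply ln_le; lra).
    destruct (Rpower_near alpha LM (ln (INR n)) Hlnn HLn HnLM) as [_ Hrho].
    fold RR in Hrho. fold K in Hrho.
    set (rho := Rpower (ln (INR n)) alpha) in *. assert (Hrho0 : 0 < rho) by apply Rpower_pos.
    assert (HX : X0 <= INR n). { apply Rle_trans with (INR n0); auto. apply le_INR; unfold n; lia. }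
    specialize (HX0 _ HX). rewrite counting_INR in HX0. fold rho in HX0.
    specialize (Hfd (s + j)%nat). fold n in Hfd.
    set (D := f n - f (S n)) in *.
    set (sq := sqrt (INR n)) in *. assert (Hsq : 0 < sq) by (apply sqrt_lt_R0; lra).
    set (Cn := INR (count_upto P n)) in *.
    apply Rle_trans with (c * sq / rho * / (2 * sq * (INR n + 1))).
    - rewrite Hn. replace (INR s + INR j + 1 + 1) with (INR s + 2 + INR j) by ring.
      assert (0 < INR s + 2 + INR j) by (pose proof (pos_INR s); pose proof (pos_INR j); lra).
      replace (c * sq / rho * / (2 * sq * (INR s + 2 + INR j))) with (c / (2 * rho) * / (INR s + 2 + INR j)) by (field; lra).
      apply Rmult_le_compat_r. left; apply Rinv_0_lt_compat; lra.
      unfold Rdiv. apply Rmult_le_compat_l. lra. apply Rinv_le_contravar; nra.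
    - apply Rmult_le_compat; try lra.
      + apply Rmult_le_pos; [apply Rmult_le_pos|]; try lra. left; apply Rinv_0_lt_compat; lra.
      + left; apply Rinv_0_lt_compat. nra. }
  assert (Hsum : (c / (2 * K * RR)) * (ln (INR s + 2 + INR (M - s)) - ln (INR s + 2))
                 <= sumR (fun j => g (s + j)%nat) (M - s)).
  { apply Rle_trans with (sumR (fun j => (c / (2 * K * RR)) * / (INR s + 2 + INR j)) (M - s)).
    - rewrite sumR_scal. apply Rmult_le_compat_l. left; apply Rdiv_lt_0_compat; [lra|]. nra.
      apply harmonic. pose proof (pos_INR s); lra.
    - apply sumR_le. auto. }
  rewrite minus_INR in Hsum by lia.
  replace (INR s + 2 + (INR M - INR s)) with (INR M + 2) in Hsum by ring.
  assert (ln (INR M) <= ln (INR M + 2)) by (apply ln_le; lra).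
  assert (Hs2M : (INR s + 2) * (INR s + 2) <= 4 * INR M).
  { replace 2 with (INR 2) by reflexivity. replace 4 with (INR 4) by (simpl; lra).
    rewrite <- plus_INR, <- !mult_INR. apply le_INR. nia. }
  assert (Hs0' : 0 < INR s + 2) by (pose proof (pos_INR s); lra).
  assert (2 * ln (INR s + 2) <= ln 4 + LM).
  { unfold LM. rewrite <- ln_mult by lra. replace (2 * ln (INR s + 2)) with (ln ((INR s + 2) * (INR s + 2))).
    apply ln_le; nra. rewrite ln_mult by lra; ring. }
  assert (H16 : 2 * ln 4 <= LM).
  { unfold LM. replace (2 * ln 4) with (ln (4 * 4)) by (rewrite ln_mult by lra; ring). apply ln_le; lra. }
  assert (Hfin : c / (2 * K * RR) * (LM / 4) <= sumR g M).
  { apply Rle_trans with (c / (2 * K * RR) * (ln (INR M + 2) - ln (INR s + 2))); [|lra].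
    apply Rmult_le_compat_l. left; apply Rdiv_lt_0_compat; [lra|]. nra. unfold LM in *. lra. }
  rewrite Rpower_1ma by auto. fold RR.
  replace (c / (8 * K) * (LM * / RR)) with (c / (2 * K * RR) * (LM / 4)) by (field; lra).
  lra.
Qed.

Definition prodl (l : list nat) : nat := fold_right Nat.mul 1%nat l.

Definition goodl (k : nat) (m : nat) : Prop :=
  exists l, length l = k /\ (forall x, In x l -> is_prime_nat x) /\ m = prodl l.

Lemma setpow_list P k : (forall p, P p -> is_prime_nat p) ->
  forall n, setpow P (S k) n -> goodl (S k) n.
Proof. intros HP. induction k; intros n Hn.
  - exists (n :: nil). simpl in *. split; auto. split. intros x [<-|[]]; auto. unfold prodl; simpl; lia.
  - destruct Hn as [a [b [Ha [Hb ->]]]]. destruct (IHk b Hb) as [l [Hl [Hl2 ->]]].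
    exists (a :: l). simpl. split; auto. split. intros x [<-|Hx]; auto. reflexivity. Qed.

Lemma prime_nat_ge2 p : is_prime_nat p -> (2 <= p)%nat.
Proof. intros H. apply prime_ge_2 in H. lia. Qed.

Lemma prodl_pos l : (forall x, In x l -> is_prime_nat x) -> (0 < prodl l)%nat.
Proof. induction l; simpl; intros H. lia. unfold prodl in *; simpl.
  assert (2 <= a)%nat by (apply prime_nat_ge2; auto). assert (0 < fold_right Nat.mul 1%nat l)%nat by auto. nia. Qed.

Lemma prime_in_prodl l p : (forall x, In x l -> is_prime_nat x) -> is_prime_nat p ->
  (Z.of_nat p | Z.of_nat (prodl l))%Z -> In p l.
Proof. induction l; simpl; intros Hl Hp Hd.
  - unfold prodl in Hd; simpl in Hd. apply Z.divide_1_r_nonneg in Hd; [|lia]. apply prime_nat_ge2 in Hp. lia.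
  - assert (Ha : is_prime_nat a) by (apply Hl; left; auto). unfold prodl in Hd; simpl in Hd. rewrite Nat2Z.inj_mul in Hd. apply prime_mult in Hd; auto.
    destruct Hd as [Hd|Hd].
    + left. apply prime_div_prime in Hd; auto. lia.
    + right. apply IHl; auto. Qed.

Lemma comb (P Q : nat -> Prop) k N : (forall p, P p -> is_prime_nat p) -> (forall m, Q m -> goodl k m) ->
  sumR (fun p => indi (P p) * INR (count_upto Q (N / p))) (S N) <= INR (S k) * INR (count_upto (setmul P Q) N).
Proof.
  intros HP HQ.
  set (F := fun p m n : nat => indi (P p /\ Q m /\ (p * m)%nat = n)).
  apply Rle_trans with (sumR (fun p => sumR (fun m => indi (P p /\ Q m /\ (p * m <= N)%nat)) (S N)) (S N)).
  { apply sumR_le. intros p Hp. destruct (excluded_middle_informative (P p)) as [Pp|Pp].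
    2: { rewrite indi_F by auto. rewrite Rmult_0_l. apply sumR_nonneg. intros; apply indi_nonneg. }
    rewrite indi_T by auto. rewrite Rmult_1_l. rewrite count_sum.
    assert (Hp2 := prime_nat_ge2 _ (HP _ Pp)).
    rewrite sumR_shift.
    assert (0 <= indi (P p /\ Q 0%nat /\ (p * 0 <= N)%nat)) by apply indi_nonneg.
    enough (sumR (fun i => indi (Q (S i))) (N / p) <= sumR (fun i => indi (P p /\ Q (S i) /\ (p * S i <= N)%nat)) N) by lra.
    apply Rle_trans with (sumR (fun i => indi (P p /\ Q (S i) /\ (p * S i <= N)%nat)) (N / p)).
    - apply Req_le, sumR_ext. intros i Hi. unfold indi.
      assert (p * (N / p) <= N)%nat by (apply Nat.mul_div_le; lia).
      assert (p * S i <= p * (N / p))%nat by (apply Nat.mul_le_mono_l; lia).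
      repeat destruct excluded_middle_informative; try reflexivity; exfalso; intuition lia.
    - apply sumR_mono_range. intros; apply indi_nonneg. apply Nat.div_le_upper_bound; nia. }
  apply Rle_trans with (sumR (fun p => sumR (fun m => sumR (fun n => F p m n) (S N)) (S N)) (S N)).
  { apply sumR_le; intros p _. apply sumR_le; intros m _.
    destruct (excluded_middle_informative (P p /\ Q m /\ (p * m <= N)%nat)) as [H|H].
    - rewrite indi_T by auto. apply Rle_trans with (F p m (p * m)%nat).
      + unfold F. rewrite indi_T; intuition lra.
      + apply sumR_ge_term. intros; apply indi_nonneg. lia.
    - rewrite indi_F by auto. apply sumR_nonneg. intros; apply indi_nonneg. }
  rewrite (sumR_ext _ (fun p => sumR (fun n => sumR (fun m => F p m n) (S N)) (S N))) by (intros; apply sumR_swap).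
  rewrite sumR_swap.
  apply Rle_trans with (sumR (fun n => INR (S k) * indi (setmul P Q n)) (S N)).
  2: { rewrite sumR_scal. apply Rmult_le_compat_l. apply pos_INR.
       rewrite sumR_shift, count_sum. rewrite indi_F. lra.
       intros [a [b [Ha [Hb Hab]]]]. destruct (HQ b Hb) as [l [_ [Hl ->]]].
       assert (0 < prodl l)%nat by (apply prodl_pos; auto). assert (2 <= a)%nat by (apply prime_nat_ge2; auto). nia. }
  apply sumR_le. intros n _.
  destruct (excluded_middle_informative (setmul P Q n)) as [Hn|Hn].
  2: { rewrite indi_F by auto. rewrite Rmult_0_r. apply Req_le. apply sumR_zero. intros p _. apply sumR_zero.
       intros m _. unfold F. apply indi_F. intros [Pp [Qm Hpm]]. apply Hn. exists p, m. auto. }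
  rewrite indi_T by auto. rewrite Rmult_1_r.
  destruct Hn as [a [b [Ha [Hb ->]]]]. destruct (HQ b Hb) as [l [Hlen [Hl ->]]].
  assert (Hall : forall x, In x (a :: l) -> is_prime_nat x). { intros x [<-|Hx]; auto. }
  assert (Hprod : (a * prodl l)%nat = prodl (a :: l)) by reflexivity.
  apply Rle_trans with (sumR (fun p => indi (In p (a :: l))) (S N)).
  2: { replace (S k) with (length (a :: l)) by (simpl; lia). apply sumR_ind_list. }
  apply sumR_le. intros p _.
  destruct (excluded_middle_informative (In p (a :: l))) as [Hin|Hin].
  - rewrite indi_T by auto. unfold F. apply sumR_ind_unique. intros i j _ _ [Pp [_ Hi]] [_ [_ Hj]].
    assert (2 <= p)%nat by (apply prime_nat_ge2; auto). nia.
  - rewrite indi_F by auto. apply Req_le, sumR_zero. intros m _. unfold F. apply indi_F.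
    intros [Pp [Qm Hpm]]. apply Hin. apply prime_in_prodl; auto.
    rewrite <- Hprod, <- Hpm. exists (Z.of_nat m). rewrite Nat2Z.inj_mul. ring.
Qed.

Lemma sq_le a b : 0 <= a -> 0 <= b -> a * a <= b * b -> a <= b.
Proof. intros. nra. Qed.

Lemma sqrt_pos' x : 0 <= sqrt x.
Proof. apply sqrt_pos. Qed.

Lemma INR_le_nat (a b : nat) : (a <= b)%nat -> INR a <= INR b.
Proof. apply le_INR. Qed.

Lemma step alpha d ck beta k : 0 < d -> 0 < ck ->
  forall P Q : nat -> Prop, (forall p, P p -> is_prime_nat p) -> (forall m, Q m -> goodl k m) ->
  (exists M0 : nat, forall M : nat, (M0 <= M)%nat ->
     sumR (fun i => indi (P (S i)) * / sqrt (INR (S i))) M >= d * Rpower (ln (INR M)) (1 - alpha)) ->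
  (exists Y0, forall Y, Y0 <= Y -> INR (counting Q Y) >= ck * sqrt Y * Rpower (ln Y) beta) ->
  exists X0, forall X, X0 <= X ->
    INR (counting (setmul P Q) X) >=
      (ck * d / (INR (S k) * 4 * Kc beta * Kc (1 - alpha) * Kc (beta + (1 - alpha)))) * sqrt X
        * Rpower (ln X) (beta + (1 - alpha)).
Proof.
  intros Hd Hck P Q HP HQ [M0 HM0] [Y0 HY0].
  destruct (nat_above (2 * Y0)) as [n1 Hn1].
  set (K0 := Nat.max 6 (Nat.max M0 n1)).
  exists (INR (K0 * K0) + 1). intros X HX.
  assert (HK0 : 0 <= INR (K0 * K0)) by apply pos_INR.
  destruct (floor_bounds X) as [HN1 HN2]; [lra|].
  unfold counting at 1. set (N := Z.to_nat (Int_part X)) in *.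
  assert (HNK : (K0 * K0 <= N)%nat). { assert (INR (K0 * K0) < INR N + 1) by lra.
    destruct (le_lt_dec (K0 * K0) N) as [h|h]; auto. exfalso. apply le_INR in h. rewrite S_INR in h. lra. }
  set (Z := Nat.sqrt N).
  assert (HZ1 : (Z * Z <= N)%nat) by (apply Nat.sqrt_le_square; lia).
  assert (HZ2 : (N < S Z * S Z)%nat) by (apply Nat.sqrt_lt_square; lia).
  assert (HZK : (K0 <= Z)%nat) by (apply Nat.sqrt_le_square; lia).
  assert (HZ6 : (6 <= Z)%nat) by lia.
  assert (HZM : (M0 <= Z)%nat) by lia.
  assert (HZn : (n1 <= Z)%nat) by lia.
  assert (HZN : (Z <= N)%nat) by nia.
  assert (HN36 : 36 <= INR N) by (replace 36 with (INR 36) by (simpl; lra); apply le_INR; nia).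
  set (LN := ln (INR N)).
  assert (HLN : 0 < LN) by (apply ln_pos; lra).
  set (A := ck * sqrt (INR N) * Rpower LN beta / (2 * Kc beta)).
  assert (HKb := Kc_pos beta). assert (HKa := Kc_pos (1 - alpha)). assert (HKg := Kc_pos (beta + (1 - alpha))).
  assert (HsN : 0 < sqrt (INR N)) by (apply sqrt_lt_R0; lra).
  assert (HA : 0 < A) by (unfold A; apply Rdiv_lt_0_compat; [|lra]; apply Rmult_lt_0_compat; [nra|apply Rpower_pos]).
  assert (Hpt : forall p : nat, (1 <= p <= Z)%nat -> P p -> A * / sqrt (INR p) <= INR (count_upto Q (N / p))).
  { intros p Hp Pp. assert (Hp2 := prime_nat_ge2 _ (HP _ Pp)).
    set (q := (N / p)%nat).
    assert (Hdm := Nat.div_mod N p ltac:(lia)). assert (Hml := Nat.mod_upper_bound N p ltac:(lia)).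
    fold q in Hdm.
    assert (Hq1 : (p * q <= N)%nat) by lia.
    assert (Hq2 : (N <= 2 * p * q)%nat) by nia.
    assert (Hq3 : (Z <= 2 * q)%nat) by nia.
    assert (Hq4 : (3 <= q)%nat) by lia.
    assert (HqN : (q <= N)%nat) by nia.
    assert (Hq5 : (N <= q * q * (q * q))%nat).
    { assert (S Z <= q * q)%nat by nia. assert (S Z * S Z <= q * q * (q * q))%nat by (apply Nat.mul_le_mono; auto). lia. }
    assert (HqY : Y0 <= INR q).
    { assert (INR Z <= 2 * INR q) by (replace 2 with (INR 2) by reflexivity; rewrite <- mult_INR; apply le_INR; lia).
      assert (INR n1 <= INR Z) by (apply le_INR; auto). lra. }
    specialize (HY0 _ HqY). rewrite counting_INR in HY0. fold q.
    assert (Hq3R : 3 <= INR q) by (replace 3 with (INR 3) by (simpl; lra); apply le_INR; auto).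
    assert (Hlq : 0 < ln (INR q)) by (apply ln_pos; lra).
    assert (HL1 : LN <= 4 * ln (INR q)).
    { unfold LN. assert (ln (INR N) <= ln (INR q * INR q * (INR q * INR q))).
      { apply ln_le. lra. rewrite <- !mult_INR. apply le_INR; auto. }
      rewrite !ln_mult in H by nra. lra. }
    assert (HL2 : ln (INR q) <= LN) by (apply ln_le; [lra|apply le_INR; auto]).
    destruct (Rpower_near beta LN (ln (INR q)) Hlq HL1 HL2) as [Hrp _].
    assert (Hp0 : 0 < INR p) by (apply lt_0_INR; lia).
    assert (Hsp : 0 < sqrt (INR p)) by (apply sqrt_lt_R0; lra).
    assert (Hsq : 0 < sqrt (INR q)) by (apply sqrt_lt_R0; lra).
    assert (Hsqrt : sqrt (INR N) <= 2 * sqrt (INR p) * sqrt (INR q)).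
    { apply sq_le. lra. nra.
      replace (2 * sqrt (INR p) * sqrt (INR q) * (2 * sqrt (INR p) * sqrt (INR q)))
        with (4 * (sqrt (INR p) * sqrt (INR p)) * (sqrt (INR q) * sqrt (INR q))) by ring.
      rewrite !sqrt_sqrt by lra.
      assert (INR N <= 2 * INR p * INR q) by (replace 2 with (INR 2) by reflexivity; rewrite <- !mult_INR; apply le_INR; auto).
      nra. }
    set (rq := Rpower (ln (INR q)) beta) in *. assert (Hrq : 0 < rq) by apply Rpower_pos.
    set (rN := Rpower LN beta) in *. assert (HrN : 0 < rN) by apply Rpower_pos.
    apply Rge_le in HY0. eapply Rle_trans; [|apply HY0].
    unfold A. fold rN.
    replace (ck * sqrt (INR N) * rN / (2 * Kc beta) * / sqrt (INR p))
      with (ck * (sqrt (INR N) / (2 * sqrt (INR p))) * (rN / Kc beta)) by (field; lra).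
    apply Rmult_le_compat. 
    - apply Rmult_le_pos. lra. left; apply Rdiv_lt_0_compat; lra.
    - left; apply Rdiv_lt_0_compat; lra.
    - apply Rmult_le_compat_l. lra. apply Rmult_le_reg_r with (2 * sqrt (INR p)). lra.
      field_simplify; lra.
    - apply Rmult_le_reg_r with (Kc beta). lra. field_simplify; lra. }
  assert (Hcomb := comb P Q k N HP HQ).
  assert (Hlow : A * sumR (fun i => indi (P (S i)) * / sqrt (INR (S i))) Z
                 <= sumR (fun p => indi (P p) * INR (count_upto Q (N / p))) (S N)).
  { apply Rle_trans with (sumR (fun p => indi (P p) * INR (count_upto Q (N / p))) (S Z)).
    2: { apply sumR_mono_range. intros; apply Rmult_le_pos; [apply indi_nonneg|apply pos_INR]. lia. }
    rewrite sumR_shift. rewrite <- sumR_scal.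
    assert (0 <= indi (P 0%nat) * INR (count_upto Q (N / 0))) by (apply Rmult_le_pos; [apply indi_nonneg|apply pos_INR]).
    enough (sumR (fun i => A * (indi (P (S i)) * / sqrt (INR (S i)))) Z <=
            sumR (fun i => indi (P (S i)) * INR (count_upto Q (N / S i))) Z) by lra.
    apply sumR_le. intros i Hi. destruct (excluded_middle_informative (P (S i))) as [Pp|Pp].
    - rewrite indi_T by auto. rewrite !Rmult_1_l. apply Hpt; auto. lia.
    - rewrite indi_F by auto. lra. }
  specialize (HM0 Z HZM). apply Rge_le in HM0.
  assert (HZ36 : 6 <= INR Z) by (replace 6 with (INR 6) by (simpl; lra); apply le_INR; auto).
  assert (HlZ : 0 < ln (INR Z)) by (apply ln_pos; lra).
  assert (HZ4 : LN <= 4 * ln (INR Z)).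
  { unfold LN. assert (ln (INR N) <= ln (INR Z * INR Z * (INR Z * INR Z))).
    { apply ln_le. lra. rewrite <- !mult_INR. apply le_INR. assert (S Z <= Z * Z)%nat by nia.
      assert (S Z * S Z <= Z * Z * (Z * Z))%nat by (apply Nat.mul_le_mono; auto). lia. }
    rewrite !ln_mult in H by nra. lra. }
  assert (HZ5 : ln (INR Z) <= LN) by (apply ln_le; [lra|apply le_INR; auto]).
  destruct (Rpower_near (1 - alpha) LN (ln (INR Z)) HlZ HZ4 HZ5) as [HrZ _].
  assert (HX17 : 1 < X) by lra.
  assert (HlX : 0 < ln X) by (apply ln_pos; lra).
  assert (HNX1 : LN <= ln X) by (apply ln_le; lra).
  assert (HNX2 : ln X <= 4 * LN).
  { unfold LN. assert (ln X <= ln (4 * INR N)) by (apply ln_le; lra).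
    rewrite ln_mult in H by lra. assert (2 * ln 4 <= ln (INR N)).
    { replace (2 * ln 4) with (ln (4 * 4)) by (rewrite ln_mult by lra; ring). apply ln_le; lra. }
    lra. }
  destruct (Rpower_near (beta + (1 - alpha)) (ln X) LN HLN HNX2 HNX1) as [HrX _].
  assert (HsX : sqrt X <= 2 * sqrt (INR N)).
  { apply sq_le. apply sqrt_pos. lra. replace (2 * sqrt (INR N) * (2 * sqrt (INR N))) with (4 * (sqrt (INR N) * sqrt (INR N))) by ring.
    rewrite !sqrt_sqrt by lra. lra. }
  set (W := sumR (fun i => indi (P (S i)) * / sqrt (INR (S i))) Z) in *.
  set (Kb := Kc beta) in *. set (Ka := Kc (1 - alpha)) in *. set (Kg := Kc (beta + (1 - alpha))) in *.
  set (cR := INR (count_upto (setmul P Q) N)) in *.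
  set (RZ := Rpower (ln (INR Z)) (1 - alpha)) in *.
  set (RX := Rpower (ln X) (beta + (1 - alpha))) in *.
  assert (HRX : 0 < RX) by apply Rpower_pos.
  assert (Hk : 0 < INR (S k)) by (apply lt_0_INR; lia).
  assert (HRg : Rpower LN (beta + (1 - alpha)) = Rpower LN beta * Rpower LN (1 - alpha)) by apply Rpower_plus.
  rewrite HRg in HrX.
  set (Rb := Rpower LN beta) in *. set (Ra := Rpower LN (1 - alpha)) in *.
  assert (HRb : 0 < Rb) by apply Rpower_pos. assert (HRa : 0 < Ra) by apply Rpower_pos.
  assert (HRZ : 0 < RZ) by apply Rpower_pos.
  (* cR * (k+1) >= A * W >= A * d * RZ >= A * d * Ra / Ka *)
  assert (H1 : A * (d * (Ra / Ka)) <= INR (S k) * cR).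
  { eapply Rle_trans; [|apply Hcomb]. eapply Rle_trans; [|apply Hlow].
    apply Rmult_le_compat_l. lra. eapply Rle_trans; [|apply HM0]. apply Rmult_le_compat_l. lra.
    apply Rmult_le_reg_r with Ka. lra. field_simplify; lra. }
  unfold A in H1. fold Rb in H1.
  apply Rle_ge.
  apply Rmult_le_reg_l with (INR (S k)). lra.
  eapply Rle_trans; [|apply H1].
  apply Rle_trans with (ck * d / (4 * Kb * Ka * Kg) * (2 * sqrt (INR N)) * (Kg * (Rb * Ra))).
  - replace (INR (S k) * (ck * d / (INR (S k) * 4 * Kb * Ka * Kg) * sqrt X * RX))
      with (ck * d / (4 * Kb * Ka * Kg) * sqrt X * RX) by (field; lra).
    apply Rmult_le_compat. 
    + apply Rmult_le_pos. left; apply Rdiv_lt_0_compat; [nra|]. repeat apply Rmult_lt_0_compat; lra. apply sqrt_pos.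
    + lra.
    + apply Rmult_le_compat_l. left; apply Rdiv_lt_0_compat; [nra|]. repeat apply Rmult_lt_0_compat; lra. lra.
    + lra.
  - apply Req_le. field. lra.
Qed.

Lemma mainind alpha c : 0 < c -> forall k', exists ck, 0 < ck /\ forall P1 : nat -> Prop,
  (forall p, P1 p -> is_prime_nat p) ->
  (exists X0 : R, forall X : R, X0 <= X -> INR (counting P1 X) >= c * sqrt X / Rpower (ln X) alpha) ->
  exists Y0, forall Y, Y0 <= Y ->
    INR (counting (setpow P1 (S k')) Y) >= ck * sqrt Y * Rpower (ln Y) (INR (S k') - 1 - INR (S k') * alpha).
Proof.
  intros Hc. destruct (keyL alpha c Hc) as [d [Hd HL]].
  induction k' as [|k' IH].
  - exists c. split; auto. intros P1 HP [X0 HX0]. exists X0. intros Y HY.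
    replace (INR 1 - 1 - INR 1 * alpha) with (- alpha) by (simpl; ring).
    rewrite Rpower_Ropp. simpl setpow. specialize (HX0 Y HY). unfold Rdiv in HX0. lra.
  - destruct IH as [ck [Hck IH]].
    set (beta := INR (S k') - 1 - INR (S k') * alpha).
    exists (ck * d / (INR (S (S k')) * 4 * Kc beta * Kc (1 - alpha) * Kc (beta + (1 - alpha)))).
    split.
    { apply Rdiv_lt_0_compat. nra. pose proof (Kc_pos beta). pose proof (Kc_pos (1 - alpha)).
      pose proof (Kc_pos (beta + (1 - alpha))). assert (0 < INR (S (S k'))) by (apply lt_0_INR; lia).
      repeat apply Rmult_lt_0_compat; lra. }
    intros P1 HP Hhyp.
    assert (HQ : forall m, setpow P1 (S k') m -> goodl (S k') m) by (apply setpow_list; auto).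
    destruct (step alpha d ck beta (S k') Hd Hck P1 (setpow P1 (S k')) HP HQ (HL P1 Hhyp) (IH P1 HP Hhyp))
      as [X0 HX0].
    exists X0. intros Y HY. specialize (HX0 Y HY).
    replace (INR (S (S k')) - 1 - INR (S (S k')) * alpha) with (beta + (1 - alpha))
      by (unfold beta; rewrite (S_INR (S k')); ring).
    exact HX0.
Qed.

Theorem corollary2p5 (alpha c : R) (k : nat) :
  alpha < 1 -> 0 < c -> (2 <= k)%nat ->
  exists c1 : R, 0 < c1 /\
    forall P1 : nat -> Prop,
      (forall p, P1 p -> is_prime_nat p) ->
      (exists X0 : R, forall X : R, X0 <= X ->
         INR (counting P1 X) >= c * sqrt X / Rpower (ln X) alpha) ->
      exists X0 : R, forall X : R, X0 <= X ->
         INR (counting (setpow P1 k) X)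
           >= c1 * sqrt X * Rpower (ln X) (INR k - 1 - INR k * alpha).
Proof.
  intros Ha Hc Hk. destruct k as [|k']; [lia|].
  exact (mainind alpha c Hc k').
Qed.
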